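(* Let the random permutation $\tau$ be uniformly distributed on the alternating group $A_N$, where $N\ge 3$. Then, as $N\to\infty$, $$\Pr[C_\tau\ge t] = O\left(\frac{N}{2^t}\right),$$ with the implied constant independent of $N$ and $t$.
   Context: For a permutation $\pi$ of $\{1,\ldots,N\}$, $C_\pi$ denotes the number of cycles of $\pi$. *)

(* Defs.v *)
From mathcomp Require Import all_boot all_order all_algebra all_fingroup all_solvable.
Set Implicit Arguments. Unset Strict Implicit. Unset Printing Implicit Defensive.

(* C_pi : number of cycles of pi (fixed points count as 1-cycles). *)
Definition ncycles (N : nat) (s : 'S_N) : nat := #|porbits s|.

Definition prob_alt_cycles_ge (N t : nat) : rat :=
  (#|[set s in ('Alt_('I_N))%g | (t <= ncycles s)%N]|%:R / #|('Alt_('I_N))%g|%:R)%R.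

(* Main.v *)
Require Import Defs.
From mathcomp Require Import all_boot all_order all_algebra all_fingroup all_solvable.
From mathcomp Require Import zify.
Set Implicit Arguments. Unset Strict Implicit. Unset Printing Implicit Defensive.

Section C.
Variable T : finType.
Local Open Scope group_scope.

Definition C (s : {perm T}) := #|porbits s|.
Definition F (A : {set T}) := (\sum_(s | perm_on A s) 2 ^ C s)%N.

Lemma porbit_fix (s : {perm T}) x : s x = x -> porbit s x = [set x].
Proof.
move=> sx; apply/setP => y; rewrite inE; apply/porbitP/eqP.
  case=> i ->; rewrite permX; elim: i => //= i ->; exact: sx.
by move=> ->; exists 0%N; rewrite expg0 perm1.
Qed.

Lemma C1 : C 1 = #|T|.
Proof.
rewrite /C /porbits (eq_imset (g := fun x => [set x])); last first.
  by move=> x; rewrite porbit_fix // perm1.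
by rewrite card_imset //; apply: set1_inj.
Qed.

Lemma F0 : F set0 = (2 ^ #|T|)%N.
Proof.
rewrite /F (big_pred1 1) ?C1 // => s /=; apply/idP/eqP.
  by move=> h; apply: perm_on_id h _; rewrite cards0.
by move=> ->; apply: perm_on1.
Qed.

Lemma pred_eq (a b : T) (A : {set T}) (j : {perm T}) :
  a \notin A -> b \in a |: A ->
  (perm_on (a |: A) (tperm a b * j) && ((tperm a b * j)^-1 a == b)) = perm_on A j.
Proof.
move=> aA bA; set t := tperm a b; apply/idP/idP.
  case/andP=> ps /eqP sb.
  have sba : (t * j) b = a by rewrite -sb permKV.
  have ja : j a = a by rewrite permM /t tpermR in sba.
  apply/subsetP => x; rewrite inE => jx.
  have xa : x \in a |: A.
    apply: contraR jx => xn; apply/eqP.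
    have xa : x != a by apply: contraNneq xn => ->; rewrite setU11.
    have xb : x != b by apply: contraNneq xn => ->.
    have tx : t x = x by rewrite /t tpermD // eq_sym.
    have := out_perm ps xn; rewrite permM tx; done.
  move: xa; rewrite in_setU1; case/orP => // /eqP xa.
  by rewrite xa ja eqxx in jx.
move=> pj.
have ja : j a = a by apply: out_perm pj aA.
apply/andP; split.
  apply: perm_onM.
    apply: subset_trans (tperm_on a b) _.
    by apply/subsetP => x; rewrite !inE; case/orP=> /eqP->; rewrite ?eqxx //=; rewrite -in_setU1.
  by apply: subset_trans pj _; apply/subsetP => x xA; rewrite in_setU1 xA orbT.
apply/eqP; apply: (canLR (permK _)).
by rewrite permM /t tpermR ja.
Qed.

Lemma C_step (a b : T) (j : {perm T}) : j a = a ->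
  (2 ^ C j = (if a == b then 1 else 2) * 2 ^ C (tperm a b * j))%N.
Proof.
move=> ja; have := porbits_mul_tperm j a b; rewrite /C /=.
case: eqP => [<-|/eqP ab].
  by rewrite tperm1 mul1g mul1n.
have -> : a \notin porbit j b.
  by rewrite porbit_sym porbit_fix // inE eq_sym.
rewrite /= => h; rewrite -expnS; congr (2 ^ _)%N; move: h; rewrite -muln2; lia.
Qed.

Lemma F_step (a : T) (A : {set T}) : a \notin A ->
  (2 * F (a |: A) = (2 + #|A|) * F A)%N.
Proof.
move=> aA; rewrite /F.
rewrite (partition_big (fun s : {perm T} => s^-1 a) (mem (a |: A))); last first.
  by move=> s ps; rewrite /= perm_closed ?perm_onV // setU11.
rewrite big_setU1 //= mulnDr.
have inner : forall b, b \in a |: A ->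
  (\sum_(i : {perm T} | perm_on (a |: A) i && (i^-1 a == b)) 2 ^ C i =
   \sum_(j | perm_on A j) 2 ^ C (tperm a b * j))%N.
  move=> b bA; rewrite (reindex_inj (can_inj (tpermKg a b))) /=.
  by apply: eq_bigl => j; rewrite pred_eq.
rewrite [X in (2 * X + _)%N](_ : _ = \sum_(j | perm_on A j) 2 ^ C (tperm a a * j))%N;
  last by apply: inner; rewrite setU11.
rewrite [X in (_ + X)%N]big_distrr /=.
rewrite [X in (_ + X)%N](eq_bigr (fun b => \sum_(j | perm_on A j) 2 ^ C j)); last first.
  move=> b bA; rewrite [X in (2 * X)%N](_ : _ = \sum_(j | perm_on A j) 2 ^ C (tperm a b * j))%N;
    last by apply: inner; rewrite in_setU1 bA orbT.
  rewrite big_distrr /=; apply: eq_bigr => j pj.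
  have ja : j a = a by apply: out_perm pj aA.
  have ab : a != b by apply: contraNneq aA => ->.
  by rewrite (C_step b ja) (negbTE ab).
rewrite sum_nat_const tperm1.
under eq_bigr do rewrite mul1g.
by rewrite mulnDl.
Qed.

Lemma F_all n : forall A : {set T}, #|A| = n ->
  (2 ^ n * F A = 2 ^ #|T| * n.+1`!)%N.
Proof.
elim: n => [|n IH] A cA.
  by move/eqP: cA; rewrite cards_eq0 => /eqP ->; rewrite F0 mul1n muln1.
have : (0 < #|A|)%N by rewrite cA.
case/card_gt0P => a aA.
have aA' : a \notin A :\ a by rewrite setD11.
have cA' : #|A :\ a| = n by move: cA; rewrite (cardsD1 a A) aA add1n => [[]].
have eA : A = a |: (A :\ a) by rewrite setD1K.
rewrite eA expnS -mulnA mulnCA F_step // cA' mulnCA IH // factS.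
by rewrite mulnCA; congr (_ * (_ * _))%N; rewrite addnC addn2.
Qed.

Lemma F_T : F setT = (#|T|.+1)`!.
Proof.
have := F_all (cardsT T) => /eqP; rewrite eqn_pmul2l ?expn_gt0 //.
by move/eqP.
Qed.

Lemma count_bound (t : nat) (S : {set {perm T}}) :
  (#|[set s in S | t <= C s]| * 2 ^ t <= (#|T|.+1)`!)%N.
Proof.
rewrite -F_T /F -sum_nat_const.
apply: (@leq_trans (\sum_(s in [set s in S | t <= C s]) 2 ^ C s)%N).
  by apply: leq_sum => s; rewrite inE => /andP[_ h]; rewrite leq_pexp2l.
rewrite [X in (_ <= X)%N](bigID (mem [set s in S | t <= C s])) /=.
apply: leq_trans (leq_addr _ _).
apply: eq_leq; apply: eq_bigl => s; have -> : perm_on [set: T] s by apply/subsetP => x; rewrite inE. by [].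
Qed.
End C.
Import GRing.Theory Num.Theory.
Local Open Scope ring_scope.

Theorem theorem2p2 :
  exists K : rat, forall N t : nat, (3 <= N)%N ->
    prob_alt_cycles_ge N t <= K * N%:R / 2 ^+ t.
Proof.
exists 3%:R => N t N3; rewrite /prob_alt_cycles_ge.
set c := #|_|.
have hc : (c * 2 ^ t <= N.+1`!)%N.
  by have := count_bound t ('Alt_('I_N))%g; rewrite card_ord.
have hA : (2 * #|('Alt_('I_N))%g| = N`!)%N.
  by rewrite -[in RHS](card_ord N) card_Alt // card_ord; apply: leq_trans N3.
set A := #|_| in hA *.
have A0 : (0 < A)%N.
  by rewrite lt0n; apply/negP => /eqP A0; move: (fact_gt0 N); rewrite -hA A0 muln0.
rewrite ler_pdivrMr ?ltr0n // mulrAC ler_pdivlMr ?exprn_gt0 ?ltr0n //.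
rewrite -natrX -!natrM ler_nat.
apply: leq_trans hc _.
rewrite factS -hA; nia.
Qed.
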